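(* Let $0<\tau\le L$ and let $f:\mathbb{R}^n\to\mathbb{R}$ be strongly convex with constant $\tau$ with $L$-Lipschitz gradient, with minimizer $x^*$. Consider the following randomized coordinate-descent algorithm with input $x_0\in\mathbb{R}^n$ and $\eta>0$: for $k=0,1,2,\dots$, choose $d_k=\mathbf{e}_i$ with $i\in\{1,\dots,n\}$ uniformly at random (independently of the past), obtain from a line search a step $\alpha_k$ with $|\alpha_k-\alpha^*|\le\eta$ where $\alpha^*=\arg\min_{\alpha\in\mathbb{R}} f(x_k+\alpha d_k)$, and set $x_{k+1}=x_k+\alpha_k d_k$. Assume that for the given $\eta$ each such line search uses at most $T_\ell(\eta)$ queries to a pairwise comparison oracle. If $x_K$ is the estimate of $x^*$ produced after requesting no more than $K$ pairwise comparisons, then \[ \sup_f \mathbb{E}[ f(x_{K})-f(x^* ) ] \leq \frac{4nL^2 \eta^2}{\tau} \quad \text{ whenever } \quad K \geq \frac{4n L}{ \tau} \log\left( \frac{f(x_0)-f(x^* )}{\eta^2\, 2 n L^2 / \tau} \right) T_\ell(\eta), \] where the expectation is with respect to the random choice of $d_k$ at each iteration and the supremum is over such $f$.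
   Context: $\mathbf{e}_i$ denotes the $i$-th standard basis vector of $\mathbb{R}^n$. A function $f$ is strongly convex with constant $\tau>0$ if $f(y)\ge f(x)+\langle\nabla f(x),y-x\rangle+\frac{\tau}{2}\|x-y\|^2$ for all $x,y$; its gradient is $L$-Lipschitz if $\|\nabla f(x)-\nabla f(y)\|\le L\|x-y\|$. A pairwise comparison oracle answers queries $(x,y)$ with a value in $\{-1,1\}$ intended to indicate $\mathrm{sign}\{f(y)-f(x)\}$. *)

(* Defs.v *)
From HB Require Import structures.
From mathcomp Require Import all_boot all_order all_algebra.
From mathcomp Require Import reals exp.
Set Implicit Arguments. Unset Strict Implicit. Unset Printing Implicit Defensive.
Import Order.TTheory GRing.Theory Num.Theory.
Local Open Scope ring_scope.

Section Defs.
Variables (R : realType) (n : nat).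

Definition vec := 'I_n -> R.

Definition dotv (x y : vec) : R := \sum_(j < n) x j * y j.
Definition normv (x : vec) : R := Num.sqrt (dotv x x).
Definition subv (x y : vec) : vec := fun j => x j - y j.
Definition add_coord (x : vec) (a : R) (i : 'I_n) : vec :=
  fun j => x j + a * (j == i)%:R.

Definition is_gradient (f : vec -> R) (g : vec -> vec) : Prop :=
  forall x : vec, forall eps : R, 0 < eps -> exists2 delta : R, 0 < delta &
    forall y : vec, normv (subv y x) < delta ->
      `|f y - f x - dotv (g x) (subv y x)| <= eps * normv (subv y x).

Definition strongly_convex_grad (f : vec -> R) (g : vec -> vec) (tau : R) : Prop :=
  forall x y : vec,
    f y >= f x + dotv (g x) (subv y x) + tau / 2 * normv (subv x y) ^+ 2.

Definition lipschitz_grad (g : vec -> vec) (L : R) : Prop :=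
  forall x y : vec, normv (subv (g x) (g y)) <= L * normv (subv x y).

Definition is_minimizer (f : vec -> R) (xs : vec) : Prop :=
  forall y : vec, f xs <= f y.

(* A history is the list of
   chosen coordinates, MOST RECENT FIRST; alpha (i :: h) is the step returned
   by the line search along e_i at the iterate reached after history h. *)
Fixpoint iterate (x0 : vec) (alpha : seq 'I_n -> R) (h : seq 'I_n) : vec :=
  match h with
  | [::] => x0
  | i :: h' => add_coord (iterate x0 alpha h') (alpha (i :: h')) i
  end.

Definition accurate_linesearch (f : vec -> R) (x0 : vec)
    (alpha : seq 'I_n -> R) (eta : R) : Prop :=
  forall (h : seq 'I_n) (i : 'I_n) (beta : R),
    (forall a : R, f (add_coord (iterate x0 alpha h) beta i)
                   <= f (add_coord (iterate x0 alpha h) a i)) ->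
    `|alpha (i :: h) - beta| <= eta.

(* Expectation of f(x_k) - f(x^* ) when the k coordinates are drawn
   independently and uniformly from {1..n}. *)
Definition expected_gap (f : vec -> R) (x0 xs : vec) (alpha : seq 'I_n -> R)
    (k : nat) : R :=
  (n%:R ^+ k)^-1 * \sum_(s : k.-tuple 'I_n) (f (iterate x0 alpha s) - f xs).

End Defs.

(* Main.v *)
Require Import Defs.
From HB Require Import structures.
From mathcomp Require Import all_boot all_order all_algebra.
From mathcomp Require Import reals exp.
From mathcomp Require Import classical_sets.
From mathcomp Require Import ring lra.
From Stdlib Require Import FunctionalExtensionality.
Import Order.TTheory GRing.Theory Num.Theory.
Local Open Scope ring_scope.
Local Notation expR := sequences.expR.

Section Vec.
Variables (R : realType) (n : nat).

Lemma dot_coord (v x : vec R n) (a b : R) (i : 'I_n) :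
  dotv v (subv (add_coord x a i) (add_coord x b i)) = (a - b) * v i.
Proof.
rewrite /dotv /subv /add_coord (bigD1 i) //= big1 => [|j /negbTE ->].
  rewrite eqxx addr0 !mulr1; ring.
by rewrite !mulr0 !addr0 subrr mulr0.
Qed.

Lemma norm_coord (x : vec R n) (a b : R) (i : 'I_n) :
  normv (subv (add_coord x a i) (add_coord x b i)) = `|a - b|.
Proof.
rewrite /normv dot_coord /subv /add_coord eqxx -sqrtr_sqr; congr Num.sqrt.
by rewrite !mulr1 expr2; ring.
Qed.

Lemma dotvv_ge0 (v : vec R n) : 0 <= dotv v v.
Proof. by rewrite /dotv; apply: sumr_ge0 => j _; rewrite -expr2 sqr_ge0. Qed.

Lemma normv_sqr (v : vec R n) : normv v ^+ 2 = dotv v v.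
Proof. by rewrite /normv sqr_sqrtr // dotvv_ge0. Qed.

Lemma coord_le_norm (v : vec R n) i : `|v i| <= normv v.
Proof.
rewrite /normv -sqrtr_sqr; apply: ler_wsqrtr.
rewrite /dotv (bigD1 i) //= expr2 lerDl; apply: sumr_ge0 => j _.
by rewrite -expr2 sqr_ge0.
Qed.

Lemma add_coord0 (x : vec R n) i : add_coord x 0 i = x.
Proof. apply: functional_extensionality => j; by rewrite /add_coord mul0r addr0. Qed.

End Vec.


Lemma root_exists (R : realType) (psi : R -> R) (tau L : R) :
  0 < tau -> 0 < L ->
  (forall a b, tau * (a - b) ^+ 2 <= (psi a - psi b) * (a - b)) ->
  (forall a b, `|psi a - psi b| <= L * `|a - b|) ->
  exists c, psi c = 0.
Proof.
move=> tau0 L0 mon lip.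
have monl : forall a b, b < a -> psi b < psi a.
  move=> a b ab; have := mon a b; rewrite expr2 => h.
  have : 0 < a - b by rewrite subr_gt0.
  move=> d0; have : 0 < tau * ((a - b) * (a - b)) by rewrite !mulr_gt0.
  nra.
pose u := `|psi 0| / tau.
have e : tau * u = `|psi 0| by rewrite /u mulrC divfK // gt_eqF.
have u0 : 0 <= u by rewrite /u divr_ge0 // ltW.
have n0 := normr_ge0 (psi 0).
have n1 := ler_norm (psi 0).
have n2 : - psi 0 <= `|psi 0| by rewrite -normrN; apply: ler_norm.
pose lo := - u; pose hi := u.
have plo : psi lo <= 0.
  have := mon 0 lo; rewrite /lo expr2 sub0r opprK => h.
  have [u00|up] := eqVneq u 0.
    by move: e h; rewrite /lo u00 oppr0 mulr0 => e; lra.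
  have up' : 0 < u by rewrite lt0r up.
  nra.
have phi : 0 <= psi hi.
  have := mon hi 0; rewrite /hi expr2 subr0 => h.
  have [u00|up] := eqVneq u 0.
    by move: e h; rewrite u00 mulr0 => e; lra.
  have up' : 0 < u by rewrite lt0r up.
  nra.
pose S := [set a : R | psi a <= 0]%classic.
have Sne : (S !=set0)%classic by exists lo.
have Sub : ubound S hi.
  move=> a Sa; rewrite leNgt; apply/negP => /monl h; rewrite /S /= in Sa; lra.
have hs : has_sup S by split => //; exists hi.
exists (sup S).
set c := sup S.
have [cneg|cpos|//] := ltgtP (psi c) 0.
- pose d := - psi c / (2 * L).
  have d0 : 0 < d by rewrite /d divr_gt0 // ?oppr_gt0 // mulr_gt0.
  have Ld : L * d = - psi c / 2 by rewrite /d; field; rewrite gt_eqF.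
  have Sd : S (c + d).
    rewrite /S /=; have := lip (c + d) c.
    have -> : c + d - c = d by ring.
    rewrite (gtr0_norm d0) Ld => h.
    have := ler_norm (psi (c + d) - psi c); lra.
  have := sup_upper_bound hs Sd; rewrite -/c; lra.
- pose d := psi c / (2 * L).
  have d0 : 0 < d by rewrite /d divr_gt0 // mulr_gt0.
  have [e1 Se ce] := sup_adherent d0 hs.
  rewrite -/c in ce.
  have ec : e1 <= c by apply: sup_upper_bound.
  have Ld : L * d = psi c / 2 by rewrite /d; field; rewrite gt_eqF.
  have := lip c e1; rewrite (ger0_norm (_ : 0 <= c - e1)) ?subr_ge0 // => h.
  have := ler_norm (psi c - psi e1).
  rewrite /S /= in Se.
  have : L * (c - e1) < L * d by rewrite ltr_pM2l //; lra.
  lra.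
Qed.


Section Coord.
Variables (R : realType) (n : nat) (tau L : R) (f : vec R n -> R) (g : vec R n -> vec R n).
Hypothesis tau0 : 0 < tau.
Hypothesis tauL : tau <= L.
Hypothesis hsc : strongly_convex_grad f g tau.
Hypothesis hlip : lipschitz_grad g L.

Lemma sc_coord x i a b :
  f (add_coord x a i) + g (add_coord x a i) i * (b - a) + tau / 2 * (a - b) ^+ 2
  <= f (add_coord x b i).
Proof.
have := hsc (add_coord x a i) (add_coord x b i).
by rewrite dot_coord norm_coord real_normK ?num_real // mulrC.
Qed.

Lemma step x i al eta :
  (forall beta, (forall a, f (add_coord x beta i) <= f (add_coord x a i)) ->
     `|al - beta| <= eta) ->
  f (add_coord x al i) <= f x - (g x i) ^+ 2 / (4 * L) + L * eta ^+ 2.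
Proof.
move=> acc.
have L0 : 0 < L by apply: lt_le_trans tauL.
pose psi a := g (add_coord x a i) i.
have mon : forall a b, tau * (a - b) ^+ 2 <= (psi a - psi b) * (a - b).
  move=> a b; have h1 := sc_coord x i a b; have h2 := sc_coord x i b a.
  rewrite /psi; have e : (b - a) ^+ 2 = (a - b) ^+ 2 by rewrite -sqrrN opprB.
  rewrite e in h2.
  have e2 : b - a = - (a - b) by rewrite opprB.
  rewrite e2 in h1.
  move: h1 h2; set u := (a - b) ^+ 2 => h1 h2.
  rewrite mulrN in h1.
  lra.
have lip : forall a b, `|psi a - psi b| <= L * `|a - b|.
  move=> a b; have h1 := @coord_le_norm _ _ (subv (g (add_coord x a i)) (g (add_coord x b i))) i.
  have h2 := hlip (add_coord x a i) (add_coord x b i).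
  rewrite norm_coord in h2; exact: le_trans h1 h2.
have [c pc] := root_exists _ _ _ _ tau0 L0 mon lip.
have cmin : forall a, f (add_coord x c i) <= f (add_coord x a i).
  move=> a; have := sc_coord x i c a; rewrite -/(psi c) pc mul0r addr0.
  have : 0 <= tau / 2 * (c - a) ^+ 2 by rewrite mulr_ge0 ?sqr_ge0 ?divr_ge0 // ltW.
  lra.
have hal := acc c cmin.
have up : forall a b, f (add_coord x b i) <= f (add_coord x a i) + psi a * (b - a) + L * (b - a) ^+ 2.
  move=> a b; have := sc_coord x i b a; rewrite -/(psi b).
  have : 0 <= tau / 2 * (b - a) ^+ 2 by rewrite mulr_ge0 ?sqr_ge0 ?divr_ge0 // ltW.
  have h3 := lip b a.
  have h4 : (psi b - psi a) * (b - a) <= L * (b - a) ^+ 2.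
    apply: le_trans (ler_norm _) _; rewrite normrM -(real_normK (num_real (b - a))) expr2 mulrA.
    by apply: ler_wpM2r => //; rewrite mulrC.
  have e : a - b = - (b - a) by rewrite opprB.
  rewrite e mulrN; move: h4; set d := b - a; lra.
have p0 : psi 0 = g x i by rewrite /psi add_coord0.
pose t := - psi 0 / (2 * L).
have ht := up 0 t; rewrite add_coord0 in ht.
have et : f x + psi 0 * (t - 0) + L * (t - 0) ^+ 2 = f x - psi 0 ^+ 2 / (4 * L).
  by rewrite /t; field; rewrite gt_eqF.
rewrite et p0 in ht.
have hc := cmin t.
have hu := up c al; rewrite -/(psi c) pc mul0r addr0 in hu.
have hd : (al - c) ^+ 2 <= eta ^+ 2.
  rewrite -(real_normK (num_real (al - c))).
  have := normr_ge0 (al - c); nra.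
have : L * (al - c) ^+ 2 <= L * eta ^+ 2 by rewrite ler_pM2l.
lra.
Qed.
End Coord.


Lemma sum_tuple_cons (R : realType) (T : finType) k (F : k.+1.-tuple T -> R) :
  \sum_(t : k.+1.-tuple T) F t = \sum_(s : k.-tuple T) \sum_(i : T) F [tuple of i :: s].
Proof.
rewrite (reindex (fun p : T * k.-tuple T => [tuple of p.1 :: p.2])) /=.
  by rewrite exchange_big pair_big /=.
exists (fun t => (thead t, [tuple of behead t])) => [[i s] _|t _] /=.
  by rewrite theadE; congr pair; apply: val_inj.
by rewrite -tuple_eta.
Qed.

Lemma sum_tuple0 (R : realType) (T : finType) (F : 0.-tuple T -> R) :
  \sum_(t : 0.-tuple T) F t = F [tuple].
Proof.
rewrite (bigD1 [tuple]) //= big1 ?addr0 // => t /eqP []; exact: tuple0.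
Qed.

Lemma grad_bound (R : realType) (n : nat) (tau : R) f g (x xs : vec R n) :
  0 < tau -> strongly_convex_grad f g tau ->
  2 * tau * (f x - f xs) <= \sum_j g x j ^+ 2.
Proof.
move=> t0 hsc; have := hsc x xs; rewrite normv_sqr /dotv => h.
have key : - (\sum_j g x j ^+ 2) / (2 * tau) <=
    \sum_j g x j * subv xs x j + tau / 2 * \sum_j subv x xs j * subv x xs j.
  rewrite mulr_sumr -big_split /= mulNr mulr_suml -sumrN; apply: ler_sum => j _.
  rewrite /subv; set d := xs j - x j.
  have -> : x j - xs j = - d by rewrite /d opprB.
  have e : g x j * d + tau / 2 * (- d * - d) - (- (g x j ^+ 2 / (2 * tau)))
       = (tau * d + g x j) ^+ 2 / (2 * tau) by field; rewrite gt_eqF.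
  have : 0 <= (tau * d + g x j) ^+ 2 / (2 * tau) by rewrite divr_ge0 ?sqr_ge0 // mulr_ge0 // ltW.
  rewrite -e; lra.
have e2 : 2 * tau * (- (\sum_j g x j ^+ 2) / (2 * tau)) = - (\sum_j g x j ^+ 2).
  by field; rewrite gt_eqF.
have : 2 * tau * (- (\sum_j g x j ^+ 2) / (2 * tau)) <= 2 * tau * (f xs - f x).
  rewrite ler_pM2l ?mulr_gt0 //; lra.
rewrite e2; lra.
Qed.


Section Main.
Variables (R : realType) (n : nat) (tau L eta : R)
    (f : vec R n -> R) (g : vec R n -> vec R n) (xs x0 : vec R n)
    (alpha : seq 'I_n -> R).
Hypothesis n0 : (0 < n)%N.
Hypothesis tau0 : 0 < tau.
Hypothesis tauL : tau <= L.
Hypothesis hsc : strongly_convex_grad f g tau.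
Hypothesis hlip : lipschitz_grad g L.
Hypothesis acc : accurate_linesearch f x0 alpha eta.

Let D h := f (iterate x0 alpha h) - f xs.

Lemma hist_bound h :
  \sum_(i < n) D (i :: h) <= (n%:R - tau / (2 * L)) * D h + n%:R * (L * eta ^+ 2).
Proof.
have L0 : 0 < L by apply: lt_le_trans tauL.
set x := iterate x0 alpha h.
have H1 : \sum_(i < n) D (i :: h) <=
    \sum_(i < n) ((f x - f xs + L * eta ^+ 2) - g x i ^+ 2 / (4 * L)).
  apply: ler_sum => i _; rewrite /D /=.
  have := @step _ _ _ _ _ _ tau0 tauL hsc hlip _ _ _ _ (acc h i); rewrite -/x; lra.
apply: le_trans H1 _.
rewrite sumrB sumr_const card_ord -mulr_suml -mulr_natl.
have G := @grad_bound _ _ _ _ _ x xs tau0 hsc.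
have : 2 * tau * (f x - f xs) / (4 * L) <= (\sum_j g x j ^+ 2) / (4 * L).
  by rewrite ler_pM2r // invr_gt0 mulr_gt0.
have -> : 2 * tau * (f x - f xs) / (4 * L) = tau / (2 * L) * (f x - f xs).
  by field; rewrite gt_eqF.
rewrite /D -/x; move: (\sum_j _) => S.
move: (tau / (2 * L)) => c; lra.
Qed.

Let E k := expected_gap f x0 xs alpha k.

Lemma rec k : E k.+1 <= (1 - tau / (2 * n%:R * L)) * E k + L * eta ^+ 2.
Proof.
have L0 : 0 < L by apply: lt_le_trans tauL.
have N0 : 0 < n%:R :> R by rewrite ltr0n.
rewrite /E /expected_gap sum_tuple_cons.
set S := \sum_(s : k.-tuple 'I_n) (f (iterate x0 alpha s) - f xs).
have H : \sum_(s : k.-tuple 'I_n) \sum_(i < n) (f (iterate x0 alpha [tuple of i :: s]) - f xs)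
   <= (n%:R - tau / (2 * L)) * S + n%:R * (L * eta ^+ 2) * n%:R ^+ k.
  have hb : forall s : k.-tuple 'I_n,
      \sum_(i < n) (f (iterate x0 alpha [tuple of i :: s]) - f xs)
      <= (n%:R - tau / (2 * L)) * (f (iterate x0 alpha s) - f xs) + n%:R * (L * eta ^+ 2).
    by move=> s; exact: (hist_bound s).
  apply: le_trans (ler_sum _ (fun s _ => hb s)) _.
  rewrite big_split /= -mulr_sumr sumr_const card_tuple card_ord.
  by rewrite -[_ *+ (n ^ k)]mulr_natr natrX.
have M0 : 0 < n%:R ^+ k :> R by rewrite exprn_gt0.
apply: le_trans (ler_wpM2l _ H) _; first by rewrite invr_ge0 ltW // exprn_gt0.
rewrite exprS le_eqVlt; apply/orP; left; apply/eqP.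
by field; rewrite !gt_eqF.
Qed.

Lemma E0 : E 0 = f x0 - f xs.
Proof. by rewrite /E /expected_gap sum_tuple0 expr0 invr1 mul1r. Qed.

Lemma bound k : E k <= L * eta ^+ 2 / (tau / (2 * n%:R * L))
   + (1 - tau / (2 * n%:R * L)) ^+ k * (E 0 - L * eta ^+ 2 / (tau / (2 * n%:R * L))).
Proof.
have L0 : 0 < L by apply: lt_le_trans tauL.
have N1 : 1 <= n%:R :> R by rewrite ler1n.
set rho := tau / (2 * n%:R * L).
have rho0 : 0 < rho by rewrite /rho divr_gt0 // !mulr_gt0 // ltr0n.
have rho1 : rho <= 1 / 2.
  rewrite /rho ler_pdivrMr ?mulr_gt0 ?ltr0n //.
  have : tau <= n%:R * L by apply: le_trans tauL _; rewrite ler_peMl // ltW.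
  lra.
set eps := L * eta ^+ 2 / rho.
have epsE : rho * eps = L * eta ^+ 2 by rewrite /eps mulrC divfK // gt_eqF.
elim: k => [|k IH]; first by rewrite expr0 mul1r; lra.
apply: le_trans (rec k) _.
rewrite -/rho [(1 - rho) ^+ k.+1]exprS.
have : (1 - rho) * E k <= (1 - rho) * (eps + (1 - rho) ^+ k * (E 0 - eps)).
  by rewrite ler_wpM2l //; lra.
move: ((1 - rho) ^+ k) => Q.
rewrite -epsE.
set z := E 0 - eps.
move=> h; have e : (1 - rho) * (eps + Q * z) + rho * eps = eps + (1 - rho) * Q * z by ring.
lra.
Qed.
End Main.


Theorem theorem5 (R : realType) (n : nat) (tau L eta : R)
    (f : vec R n -> R) (g : vec R n -> vec R n) (xstar x0 : vec R n)
    (alpha : seq 'I_n -> R) (Tl : R -> nat) (K : nat) :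
  (0 < n)%N -> 0 < tau -> tau <= L -> 0 < eta ->
  is_gradient f g -> strongly_convex_grad f g tau -> lipschitz_grad g L ->
  is_minimizer f xstar ->
  accurate_linesearch f x0 alpha eta ->
  (0 < Tl eta)%N ->
  4 * n%:R * L / tau
    * ln ((f x0 - f xstar) / (eta ^+ 2 * 2 * n%:R * L ^+ 2 / tau))
    * (Tl eta)%:R <= K%:R ->
  forall k : nat, (K %/ Tl eta <= k)%N ->
    expected_gap f x0 xstar alpha k <= 4 * n%:R * L ^+ 2 * eta ^+ 2 / tau.
Proof.
move=> n0 tau0 tauL eta0 _ hsc hlip hmin acc T0 HK k hk.
have L0 : 0 < L by apply: lt_le_trans tauL.
have N0 : 0 < n%:R :> R by rewrite ltr0n.
have N1 : 1 <= n%:R :> R by rewrite ler1n.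
have hb := @bound _ _ _ _ _ _ _ xstar x0 alpha n0 tau0 tauL hsc hlip acc k.
rewrite /= in hb.
have e00 : expected_gap f x0 xstar alpha 0 = f x0 - f xstar.
  by rewrite /expected_gap sum_tuple0 expr0 invr1 mul1r.
rewrite e00 in hb.
set rho := tau / (2 * n%:R * L) in hb.
have rho0 : 0 < rho by rewrite /rho divr_gt0 // !mulr_gt0.
have rho1 : rho <= 1 / 2.
  rewrite /rho ler_pdivrMr ?mulr_gt0 //.
  have : tau <= n%:R * L by apply: le_trans tauL _; rewrite ler_peMl // ltW.
  lra.
set eps := eta ^+ 2 * 2 * n%:R * L ^+ 2 / tau in HK.
have epsE : L * eta ^+ 2 / rho = eps.
  by rewrite /eps /rho; field; rewrite !gt_eqF.
rewrite epsE in hb.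
have eps0 : 0 < eps by rewrite /eps divr_gt0 // !mulr_gt0 // exprn_gt0.
have goalE : 4 * n%:R * L ^+ 2 * eta ^+ 2 / tau = 2 * eps.
  by rewrite /eps; field; rewrite gt_eqF.
rewrite goalE; apply: le_trans hb _.
set q := 1 - rho.
set e0 := f x0 - f xstar in HK *.
have e0pos : 0 <= e0 by rewrite /e0 subr_ge0.
have q0 : 0 <= q by rewrite /q; lra.
have q1 : q <= 1 by rewrite /q; lra.
have qk0 : 0 <= q ^+ k by rewrite exprn_ge0.
have qk1 : q ^+ k <= 1 by rewrite exprn_ile1.
suff : q ^+ k * (e0 - eps) <= eps by lra.
have [small|big] := lerP e0 (2 * eps).
  have [h|h] := lerP e0 eps.
    have : q ^+ k * (e0 - eps) <= 0 by rewrite mulr_ge0_le0 // subr_le0.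
    lra.
  nra.
pose r := e0 / eps.
have r2 : 2 < r by rewrite /r ltr_pdivlMr //.
have r0 : 0 < r by lra.
have e0r : e0 = r * eps by rewrite /r divfK // gt_eqF.
have hK : (K < k.+1 * Tl eta)%N.
  apply: (leq_trans (ltn_ceil K T0)); by rewrite leq_mul2r ltnS hk orbT.
have hKR : K%:R < (k.+1)%:R * (Tl eta)%:R :> R by rewrite -natrM ltr_nat.
have lnr : 2 * ln r < rho * (k.+1)%:R.
  have e4 : 4 * n%:R * L / tau = 2 / rho by rewrite /rho; field; rewrite !gt_eqF.
  rewrite e4 -/r in HK.
  have T0R : 0 < (Tl eta)%:R :> R by rewrite ltr0n.
  have : 2 / rho * ln r < (k.+1)%:R.
    rewrite -(ltr_pM2r T0R); lra.
  move=> h; have -> : 2 * ln r = rho * (2 / rho * ln r) by field; rewrite gt_eqF.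
  by rewrite ltr_pM2l.
have r2e : r ^+ 2 <= expR rho ^+ k.+1.
  rewrite -expRM_natr -(lnK r0) -expRM_natl; apply/ltW; rewrite ltr_expR.
  lra.
have qe : q * expR rho <= 1.
  have := expR_ge1Dx (- rho); rewrite expRN -/q => h.
  have := expR_gt0 rho => h0.
  by apply: le_trans (ler_wpM2r (ltW h0) h) _; rewrite mulVf ?gt_eqF.
have qe0 : 0 <= q * expR rho by rewrite mulr_ge0 // ltW // expR_gt0.
have hq : q ^+ k.+1 * r ^+ 2 <= 1.
  apply: le_trans (_ : q ^+ k.+1 * expR rho ^+ k.+1 <= 1).
    by rewrite ler_wpM2l // exprn_ge0.
  by rewrite -exprMn exprn_ile1.
have hqk : q ^+ k <= 2 * q ^+ k.+1.
  rewrite exprS; have : 1 / 2 <= q by rewrite /q; lra.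
  nra.
have : q ^+ k.+1 * r <= 1 / 2.
  have := exprn_ge0 k.+1 q0; rewrite expr2 in hq; nra.
rewrite e0r; move: (q ^+ k.+1) hqk hq => Q hqk hq h.
nra.
Qed.
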